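(* Let $n\geq 2$ and let $C$ be an all-ones CRC in $G_n$ with covering radius $\rho\geq 2$, $c_1=1$, $c_2=3$, $\mathbf{0}\in C$ and $-e_n\in C$. Then: (1) the intersection of any cap with the $0$-slice contains at most one word of $C$; in particular $C$ contains at most $2(n-1)$ words of type $3100$ lying in the $0$-slice; (2) every word $x$ of type $1100$ with $x_n=0$ lies in $C_2$ and is at distance two from exactly one word $y\in C$ of type $3100$ with $y_n=0$.
   Context: $G_n$: vertex set $\mathbb{Z}^n$, $x\sim y$ iff $\sum_i|x_i-y_i|=1$; $e_i$ the $i$-th unit vector. For a code $C$ with covering radius $\rho$, $C_i=\{v:d(v,C)=i\}$; $C$ is a CRC if for all $i,j$ every vertex of $C_i$ has the same number $\alpha_{ij}$ of neighbours in $C_j$, with $\alpha_{ij}=0$ for $|i-j|>1$; $a_i=\alpha_{ii}$, $c_i=\alpha_{i,i-1}$. $C$ is all-ones if $a_i=1$ for all $i$. The type of a word of weight at most four is the nonincreasing sequence of its four largest absolute entry values; type $1100$: exactly two entries $\pm1$, others $0$; type $3100$: one entry $\pm3$, one entry $\pm1$, others $0$. A cap is one of the sets $\{\varepsilon 3e_i\pm e_j: j\neq i\}$, $i\in\{1,\ldots,n\}$, $\varepsilon\in\{\pm1\}$. The $0$-slice is $\{x: x_n\in\{0,-1\}\}$. *)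

(* Defs.v *)
From mathcomp Require Import all_boot all_order all_algebra.
Set Implicit Arguments. Unset Strict Implicit. Unset Printing Implicit Defensive.
Import Order.TTheory GRing.Theory Num.Theory.
Local Open Scope ring_scope.

(* Vertices of G_n : Z^n, coordinates indexed by 'I_n (coordinate x_n is the
   one of index n.-1). *)
Definition vert (n : nat) := {ffun 'I_n -> int}.

Definition l1 {n : nat} (x y : vert n) : nat := (\sum_(i < n) absz (x i - y i))%N.

Definition adj {n : nat} (x y : vert n) : Prop := l1 x y = 1%N.

Definition code (n : nat) := vert n -> Prop.

Definition distC {n : nat} (C : code n) (v : vert n) (k : nat) : Prop :=
  (exists c, C c /\ l1 v c = k) /\ (forall c, C c -> (k <= l1 v c)%N).

Definition covrad {n : nat} (C : code n) (rho : nat) : Prop :=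
  (forall v, exists k, (k <= rho)%N /\ distC C v k) /\ (exists v, distC C v rho).

Definition nbcount {n : nat} (C : code n) (v : vert n) (j m : nat) : Prop :=
  exists s : seq (vert n), uniq s /\ size s = m /\
    forall u, u \in s <-> (adj v u /\ distC C u j).

Definition CRC {n : nat} (C : code n) (rho : nat) (alpha : nat -> nat -> nat) : Prop :=
  covrad C rho /\
  (forall i j v, (i <= rho)%N -> (j <= rho)%N -> distC C v i -> nbcount C v j (alpha i j)) /\
  (forall i j, (i <= rho)%N -> (j <= rho)%N -> (i.+1 < j)%N \/ (j.+1 < i)%N -> alpha i j = 0%N).

(* all-ones: a_i = alpha i i = 1 for all i *)
Definition all_ones (rho : nat) (alpha : nat -> nat -> nat) : Prop :=
  forall i, (i <= rho)%N -> alpha i i = 1%N.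

Definition zerov (n : nat) : vert n := [ffun => 0].
Definition minus_en (n : nat) : vert n := [ffun k : 'I_n => if val k == n.-1 then -1 else 0].

Definition type1100 {n : nat} (x : vert n) : Prop :=
  exists i j : 'I_n, i != j /\ `|x i| = 1 /\ `|x j| = 1 /\
    forall k, k != i -> k != j -> x k = 0.

Definition type3100 {n : nat} (x : vert n) : Prop :=
  exists i j : 'I_n, i != j /\ `|x i| = 3 /\ `|x j| = 1 /\
    forall k, k != i -> k != j -> x k = 0.

Definition cap {n : nat} (i : 'I_n) (eps : int) (x : vert n) : Prop :=
  exists j : 'I_n, j != i /\ exists s : int, (s = 1 \/ s = -1) /\
    forall k, x k = (if k == i then 3 * eps else if k == j then s else 0).

Definition slice0 {n : nat} (x : vert n) : Prop :=
  forall k : 'I_n, val k = n.-1 -> x k = 0 \/ x k = -1.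

Definition lastzero {n : nat} (x : vert n) : Prop :=
  forall k : 'I_n, val k = n.-1 -> x k = 0.

(* Main.v *)
Require Import Defs.
From mathcomp Require Import all_boot all_order all_algebra.
From mathcomp Require Import zify.
From Stdlib Require Import Classical ClassicalEpsilon.
Import Order.TTheory GRing.Theory Num.Theory.
Local Open Scope ring_scope.
Set Implicit Arguments. Unset Strict Implicit.

Definition upd {n} (x : vert n) (q : 'I_n) (d : int) : vert n :=
  [ffun k => x k + (if k == q then d else 0)].

Lemma l1_sym n (x y : vert n) : l1 x y = l1 y x.
Proof. rewrite /l1; apply: eq_bigr => k _; by rewrite -abszN opprB. Qed.

Lemma l1_eq0 n (x y : vert n) : l1 x y = 0%N -> x = y.
Proof.
move=> /eqP; rewrite /l1 sum_nat_eq0 => /forallP H.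
apply/ffunP => k; have := H k; rewrite /= absz_eq0 subr_eq0 => /eqP; done.
Qed.

Lemma l1_xx n (x : vert n) : l1 x x = 0%N.
Proof. rewrite /l1 big1 // => k _; by rewrite subrr. Qed.

Lemma l1_tri n (x y z : vert n) : (l1 x z <= l1 x y + l1 y z)%N.
Proof.
rewrite /l1 -big_split /=; apply: leq_sum => k _; lia.
Qed.

Lemma l1_single n (x y : vert n) (q : 'I_n) :
  (forall k, k != q -> x k = y k) -> l1 x y = absz (x q - y q).
Proof.
move=> H; rewrite /l1 (bigD1 q) //= big1 ?addn0 // => k Hk.
by rewrite (H k Hk) subrr.
Qed.

Lemma l1_double n (x y : vert n) (a b : 'I_n) : a != b ->
  (forall k, k != a -> k != b -> x k = y k) ->
  l1 x y = (absz (x a - y a) + absz (x b - y b))%N.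
Proof.
move=> Hab H; rewrite /l1 (bigD1 a) //= (bigD1 b) //= ?big1 ?addn0 //.
  by move=> k /andP [Ha Hb]; rewrite (H k Ha Hb) subrr.
by rewrite eq_sym.
Qed.

Lemma adjP n (u v : vert n) : adj u v ->
  exists q d, (d = 1 \/ d = -1) /\ v = upd u q d.
Proof.
rewrite /adj /l1 => H.
case: (boolP [exists q, (0 < absz (u q - v q))%N]) => [/existsP [q Hq]|].
  move: H; rewrite (bigD1 q) //= => H.
  have H0 : (\sum_(i < n | i != q) absz (u i - v i) == 0)%N.
    apply/eqP. set S := (\sum_(i < n | i != q) _)%N in H *. lia.
  move: H0; rewrite sum_nat_eq0 => /forallP H0.
  exists q, (v q - u q); split; first lia.
  apply/ffunP => k; rewrite !ffunE; case: eqP => [->|/eqP Hk] /=; first lia.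
  have := H0 k; rewrite Hk /= => /eqP; lia.
move=> /existsPn Hn; exfalso; move: H; rewrite big1 // => k _.
have := Hn k; lia.
Qed.

Lemma adj_by n (u v : vert n) (q : 'I_n) (d : int) :
  (d = 1 \/ d = -1) -> v = upd u q d -> adj u v.
Proof.
move=> Hd ->; rewrite /adj (l1_single (q := q)) => [|k Hk]; rewrite !ffunE.
  rewrite eqxx; lia.
by rewrite (negbTE Hk) addr0.
Qed.

Lemma adj_sym n (u v : vert n) : adj u v -> adj v u.
Proof. by rewrite /adj l1_sym. Qed.

Lemma midpoint n (x y : vert n) (k : nat) : l1 x y = k.+1 ->
  exists r, adj x r /\ l1 r y = k.
Proof.
move=> H.
case: (boolP [exists q, x q != y q]) => [/existsP [q Hq]|]; last first.
  move=> /existsPn Hn; exfalso; move: H; rewrite /l1 big1 // => i _.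
  have := Hn i; rewrite negbK => /eqP ->; by rewrite subrr.
have [d [Hd Hr]] : exists d : int, (d = 1 \/ d = -1) /\
    (absz (x q + d - y q)%R).+1 = absz (x q - y q)%R.
  case: (ltP (x q) (y q)) => Hl.
    exists 1; split; [by left| lia].
  exists (-1); split; [by right| move: Hq; lia].
exists (upd x q d); split; first exact: adj_by Hd erefl.
move: H; rewrite /l1 (bigD1 q) //= [in X in _ -> X](bigD1 q) //= !ffunE eqxx.
rewrite -Hr addSn => [[<-]]; congr (_ + _)%N.
apply: eq_bigr => i Hi; by rewrite !ffunE (negbTE Hi) addr0.
Qed.
Definition far {n} (C : code n) (u : vert n) (k : nat) := forall c, C c -> (k <= l1 u c)%N.

Lemma distC0 n (C : code n) u : distC C u 0 <-> C u.
Proof.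
split; first by case=> [[c [Hc /l1_eq0 ->]]].
move=> Hu; split; [exists u; split => //; exact: l1_xx | by []].
Qed.

Lemma far1 n (C : code n) u : ~ C u -> far C u 1.
Proof. move=> Hu c Hc; case: (posnP (l1 u c)) => // /l1_eq0 E; by subst. Qed.

Lemma far_notC n (C : code n) u k : far C u k -> (0 < k)%N -> ~ C u.
Proof. move=> H Hk Cu; have := H u Cu; rewrite l1_xx; lia. Qed.

Lemma far_step n (C : code n) u k : far C u k -> ~ distC C u k -> far C u k.+1.
Proof.
move=> H Hn c Hc; have := H c Hc; rewrite leq_eqVlt => /orP [/eqP E|//].
exfalso; apply: Hn; split => //; by exists c.
Qed.

Lemma C1_of n (C : code n) u c : ~ C u -> C c -> adj u c -> distC C u 1.
Proof. move=> Hu Hc Ha; split; [by exists c | exact: far1]. Qed.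

Lemma distC_uniq n (C : code n) u a b : distC C u a -> distC C u b -> a = b.
Proof.
move=> [[c1 [H1 E1]] F1] [[c2 [H2 E2]] F2].
have := F1 c2 H2; have := F2 c1 H1; lia.
Qed.

Lemma far_adj n (C : code n) u w : far C u 2 -> C w -> adj u w -> False.
Proof. move=> F Hw A; have := F w Hw; rewrite A. done. Qed.

Lemma far_adj' n (C : code n) u w : far C u 2 -> C w -> adj w u -> False.
Proof. move=> F Hw A; apply: (far_adj F Hw); exact: adj_sym. Qed.

Lemma far_le n (C : code n) u a b : far C u a -> (b <= a)%N -> far C u b.
Proof. move=> F H c Hc; have := F c Hc; lia. Qed.

Lemma nb_eq1 n (C : code n) v j u1 u2 : nbcount C v j 1 ->
  adj v u1 -> distC C u1 j -> adj v u2 -> distC C u2 j -> u1 = u2.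
Proof.
case=> [[|a [|b s]] [Hu [Hs Hm]]] //= A1 D1 A2 D2.
have : u1 \in [:: a] by apply/Hm.
have : u2 \in [:: a] by apply/Hm.
by rewrite !inE => /eqP -> /eqP ->.
Qed.

Lemma nb_ex1 n (C : code n) v j : nbcount C v j 1 -> exists u, adj v u /\ distC C u j.
Proof.
case=> [[|a s] [Hu [Hs Hm]]] //=; exists a; apply/Hm; by rewrite inE eqxx.
Qed.

Lemma nb_no4 n (C : code n) v j u1 u2 u3 u4 : nbcount C v j 3 ->
  adj v u1 -> distC C u1 j -> adj v u2 -> distC C u2 j ->
  adj v u3 -> distC C u3 j -> adj v u4 -> distC C u4 j ->
  uniq [:: u1; u2; u3; u4] -> False.
Proof.
case=> s [Hu [Hs Hm]] A1 D1 A2 D2 A3 D3 A4 D4 Hq.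
have : (size [:: u1; u2; u3; u4] <= size s)%N.
  apply: uniq_leq_size => // u; rewrite !inE => /or4P [] /eqP ->; by apply/Hm.
by rewrite Hs.
Qed.

Lemma nb_ex3 n (C : code n) v j a b : nbcount C v j 3 ->
  exists u, adj v u /\ distC C u j /\ u != a /\ u != b.
Proof.
case=> s [Hu [Hs Hm]].
have : has (fun u => (u != a) && (u != b)) s.
  apply/negPn/negP => /hasPn H.
  have : (size s <= size [:: a; b])%N.
    apply: uniq_leq_size => // u Hus; have := H u Hus.
    by rewrite negb_and !negbK !inE.
  by rewrite Hs.
move=> /hasP [u Hus /andP [Ha Hb]]; exists u; have := (Hm u).1 Hus; tauto.
Qed.
Ltac vcase := repeat (match goal with |- context [(?a == ?b)] => case: (a =P b) => [?|?] end; try subst); simpl in *; try (exfalso; congruence).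
Ltac veq := apply/ffunP => ?; rewrite !ffunE; vcase; lia.
Ltac vneq c := apply/eqP => /ffunP /(_ c); rewrite !ffunE; vcase; lia.

Lemma test n (i j N : 'I_n) (s t : int) : i <> j -> i <> N -> j <> N -> (s = 1 \/ s = -1) -> (t = 1 \/ t = -1) ->
  upd (upd (zerov n) i s) j t = upd (upd (zerov n) j t) i s /\ upd (zerov n) i s != upd (zerov n) N (-1)
  /\ adj (upd (upd (zerov n) i s) j t) (upd (upd (upd (zerov n) j t) i s) N 1).
Proof.
move=> Hij HiN HjN Hs Ht; split; [veq|split; [vneq i|]].
apply: (adj_by (q := N) (d := 1)); [by left| veq].
Qed.
Ltac vneqP c := move=> /ffunP /(_ c); rewrite !ffunE; vcase; lia.

Notation sg1 s := (s = 1 \/ s = -1).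

Definition Hyps n (C : code n) (N : 'I_n) : Prop :=
  C (zerov n) /\ C (upd (zerov n) N (-1)) /\
  (forall v, C v -> nbcount C v 0 1) /\
  (forall v, distC C v 1 -> nbcount C v 0 1) /\
  (forall v, distC C v 1 -> nbcount C v 1 1) /\
  (forall v, distC C v 2 -> nbcount C v 1 3) /\
  (forall v, distC C v 2 -> nbcount C v 2 1).

Lemma uniq4 (T : eqType) (a b c d : T) : a <> b -> a <> c -> a <> d -> b <> c -> b <> d -> c <> d ->
  uniq [:: a; b; c; d].
Proof.
move=> ??????; rewrite /= !inE !negb_or; repeat (apply/andP; split) => //; by apply/eqP.
Qed.


Lemma Lo n (C : code n) N (H : Hyps C N) u :
  adj (zerov n) u -> u <> upd (zerov n) N (-1) -> ~ C u.
Proof.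
case: H => [H0 [Hm [N0 _]]] A Hu Cu; apply: Hu.
apply: (nb_eq1 (N0 _ H0)) => //; try by apply/distC0.
apply: (adj_by (q := N) (d := -1)) => //; by right.
Qed.

Lemma Lm n (C : code n) N (H : Hyps C N) u :
  adj (upd (zerov n) N (-1)) u -> u <> zerov n -> ~ C u.
Proof.
case: H => [H0 [Hm [N0 _]]] A Hu Cu; apply: Hu.
apply: (nb_eq1 (N0 _ Hm)) => //; try by apply/distC0.
apply: adj_sym; apply: (adj_by (q := N) (d := -1)) => //; by right.
Qed.

Lemma D3gen n (C : code n) N (H : Hyps C N) q c0 q1 u :
  distC C q 1 -> C c0 -> adj q c0 -> adj q q1 -> distC C q1 1 -> adj q u ->
  u <> c0 -> u <> q1 -> far C u 2.
Proof.
case: H => [H0 [Hm [N0 [N10 [N11 _]]]]] Dq Cc Ac Aq Dq1 Au Hu1 Hu2.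
apply: far_step.
  apply: far1 => Cu; apply: Hu1; apply: (nb_eq1 (N10 _ Dq)) => //; by apply/distC0.
move=> Du; apply: Hu2; exact: (nb_eq1 (N11 _ Dq)).
Qed.

Lemma pC1 n (C : code n) N (H : Hyps C N) i s : i <> N -> sg1 s ->
  distC C (upd (zerov n) i s) 1.
Proof.
move=> HiN Hs; have A : adj (upd (zerov n) i s) (zerov n).
  apply: adj_sym; exact: (adj_by (q := i) (d := s)).
apply: (C1_of _ H.1 A); apply: (Lo H); first exact: adj_sym.
vneqP i.
Qed.

Lemma qC1 n (C : code n) N (H : Hyps C N) i s : i <> N -> sg1 s ->
  distC C (upd (upd (zerov n) i s) N (-1)) 1.
Proof.
move=> HiN Hs; have A : adj (upd (upd (zerov n) i s) N (-1)) (upd (zerov n) N (-1)).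
  apply: adj_sym; apply: (adj_by (q := i) (d := s)) => //; veq.
apply: (C1_of _ H.2.1 A); apply: (Lm H); first exact: adj_sym.
vneqP i.
Qed.

Lemma Dp n (C : code n) N (H : Hyps C N) i s u : i <> N -> sg1 s ->
  adj (upd (zerov n) i s) u -> u <> zerov n -> u <> upd (upd (zerov n) i s) N (-1) ->
  far C u 2.
Proof.
move=> HiN Hs Au H1 H2; apply: (D3gen H (pC1 H HiN Hs) H.1 _ _ (qC1 H HiN Hs) Au H1 H2).
  apply: adj_sym; exact: (adj_by (q := i) (d := s)).
apply: (adj_by (q := N) (d := -1)) => //; by right.
Qed.

Lemma Dq n (C : code n) N (H : Hyps C N) i s u : i <> N -> sg1 s ->
  adj (upd (upd (zerov n) i s) N (-1)) u -> u <> upd (zerov n) N (-1) -> u <> upd (zerov n) i s ->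
  far C u 2.
Proof.
move=> HiN Hs Au H1 H2; apply: (D3gen H (qC1 H HiN Hs) H.2.1 _ _ (pC1 H HiN Hs) Au H1 H2).
  apply: adj_sym; apply: (adj_by (q := i) (d := s)) => //; veq.
apply: adj_sym; apply: (adj_by (q := N) (d := -1)) => //; by right.
Qed.

Lemma enC1 n (C : code n) N (H : Hyps C N) : distC C (upd (zerov n) N 1) 1.
Proof.
have A : adj (upd (zerov n) N 1) (zerov n).
  apply: adj_sym; apply: (adj_by (q := N) (d := 1)) => //; by left.
apply: (C1_of _ H.1 A); apply: (Lo H); first exact: adj_sym.
vneqP N.
Qed.
Notation P1 i s := (upd (zerov _) i s).
Notation X2 i s j t := (upd (upd (zerov _) i s) j t).

Lemma l1_2 n (x y : vert n) (a b : 'I_n) v : a <> b ->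
  (forall k, k <> a -> k <> b -> x k = y k) ->
  (absz (x a - y a) + absz (x b - y b))%N = v -> l1 x y = v.
Proof.
move=> Hab H <-; apply: l1_double; first by apply/eqP.
move=> k /eqP ? /eqP ?; exact: H.
Qed.

Ltac l1t a b := apply: (l1_2 (a := a) (b := b)); [by [|apply: not_eq_sym]| move=> ???; rewrite !ffunE; vcase; lia | rewrite !ffunE; vcase; lia].
Ltac adjt q d := apply: (adj_by (q := q) (d := d)); [lia | veq].

Lemma x2 n (C : code n) N (H : Hyps C N) i j (s t : int) :
  i <> j -> i <> N -> j <> N -> sg1 s -> sg1 t -> distC C (X2 i s j t) 2.
Proof.
move=> Hij HiN HjN Hs Ht; split.
  exists (zerov n); split; first exact: H.1. l1t i j.
apply: (Dp H HiN Hs); [adjt j t | vneqP i | vneqP j].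
Qed.

Lemma xm2 n (C : code n) N (H : Hyps C N) i j (s t : int) :
  i <> j -> i <> N -> j <> N -> sg1 s -> sg1 t -> far C (upd (X2 i s j t) N (-1)) 2.
Proof.
move=> Hij HiN HjN Hs Ht.
apply: (Dq H HiN Hs); [adjt j t | vneqP i | vneqP N].
Qed.

Lemma Rfar n (C : code n) N (H : Hyps C N) i j s t z :
  i <> j -> i <> N -> j <> N -> sg1 s -> sg1 t ->
  adj (X2 i s j t) z -> distC C z 1 -> z <> P1 i s -> z <> P1 j t ->
  forall r, adj (X2 i s j t) r -> r <> P1 i s -> r <> P1 j t -> r <> z -> far C r 2.
Proof.
move=> Hij HiN HjN Hs Ht Az Dz Hz1 Hz2 r Ar Hr1 Hr2 Hr3.
have Dx := x2 H Hij HiN HjN Hs Ht.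
apply: far_step.
  apply: far1 => Cr; exact: (far_adj Dx.2 Cr Ar).
move=> Dr; have [_ [_ [_ [_ [_ [N21 _]]]]]] := H.
apply: (nb_no4 (N21 _ Dx) (u1 := P1 i s) (u2 := P1 j t) (u3 := z) (u4 := r)) => //.
- apply: adj_sym; adjt j t.
- exact: (pC1 H).
- apply: adj_sym; adjt i s.
- exact: (pC1 H).
- apply: uniq4 => //; try by apply: not_eq_sym.
  vneqP i.
Qed.
Lemma zN n (C : code n) N (H : Hyps C N) i j (s t : int) :
  i <> j -> i <> N -> j <> N -> sg1 s -> sg1 t ->
  distC C (upd (X2 i s j t) N 1) 1 -> False.
Proof.
move=> Hij HiN HjN Hs Ht Dz.
have Az : adj (X2 i s j t) (upd (X2 i s j t) N 1) by adjt N (1:int).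
have Hz1 : upd (X2 i s j t) N 1 <> P1 i s by vneqP j.
have Hz2 : upd (X2 i s j t) N 1 <> P1 j t by vneqP i.
have RF := Rfar H Hij HiN HjN Hs Ht Az Dz Hz1 Hz2.
have Fx := (x2 H Hij HiN HjN Hs Ht).2.
have [[w [Cw /adjP [q' [d' [Hd' Hw]]]]] _] := Dz; subst w.
case: (q' =P N) => [Eq|HqN].
  subst q'; case: Hd' => ?; subst d'; last first.
    have E : upd (upd (X2 i s j t) N 1) N (-1) = X2 i s j t by veq.
    rewrite E in Cw; exact: (far_notC Fx _ Cw).
  have Fu : far C (upd (P1 i s) N 1) 2.
    by apply: (Dp H HiN Hs); [adjt N (1:int) | vneqP i | vneqP N].
  have Du : distC C (upd (P1 i s) N 1) 2.
    split => //; exists (zerov n); split; [exact: H.1 | l1t i N].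
  have [_ [_ [_ [_ [_ [N21 _]]]]]] := H.
  apply: (nb_no4 (N21 _ Du) (u1 := P1 N 1) (u2 := P1 i s) (u3 := upd (X2 i s j t) N 1)
      (u4 := upd (upd (P1 i s) N 1) N 1)).
  - adjt i (-s).
  - exact: (enC1 H).
  - adjt N (-1:int).
  - exact: (pC1 H).
  - adjt j t.
  - done.
  - adjt N (1:int).
  - apply: (C1_of _ Cw); last by adjt j t.
    move=> Cv; apply: (far_adj Fu Cv); adjt N (1:int).
  - apply: uniq4; [vneqP N | vneqP i | vneqP i | vneqP N | vneqP N | vneqP j].
case: (q' =P i) => [Eq|Hqi].
  subst q'; have Ed : d' = s \/ d' = -s by lia.
  case: Ed => Ed; subst d'.
    apply: (far_adj (u := upd (X2 i s j t) i s) _ Cw); last by adjt N (1:int).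
    apply: RF; [adjt i s | vneqP j | vneqP i | vneqP i].
  have F : far C (upd (upd (X2 i s j t) N 1) i (-s)) 2.
    by apply: (Dp H HjN Ht); [adjt N (1:int) | vneqP j | vneqP N].
  exact: (far_notC F _ Cw).
case: (q' =P j) => [Eq|Hqj].
  subst q'; have Ed : d' = t \/ d' = -t by lia.
  case: Ed => Ed; subst d'.
    apply: (far_adj (u := upd (X2 i s j t) j t) _ Cw); last by adjt N (1:int).
    apply: RF; [adjt j t | vneqP j | vneqP i | vneqP j].
  have F : far C (upd (upd (X2 i s j t) N 1) j (-t)) 2.
    by apply: (Dp H HiN Hs); [adjt N (1:int) | vneqP i | vneqP N].
  exact: (far_notC F _ Cw).
apply: (far_adj (u := upd (X2 i s j t) q' d') _ Cw); last by adjt N (1:int).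
apply: RF; [adjt q' d' | vneqP q' | vneqP q' | vneqP q'].
Qed.
Lemma zK n (C : code n) N (H : Hyps C N) i j (s t : int) k (u : int) :
  i <> j -> i <> N -> j <> N -> sg1 s -> sg1 t -> k <> i -> k <> j -> k <> N -> sg1 u ->
  distC C (upd (X2 i s j t) k u) 1 -> False.
Proof.
move=> Hij HiN HjN Hs Ht Hki Hkj HkN Hu Dz.
have Az : adj (X2 i s j t) (upd (X2 i s j t) k u) by adjt k u.
have Hz1 : upd (X2 i s j t) k u <> P1 i s by vneqP j.
have Hz2 : upd (X2 i s j t) k u <> P1 j t by vneqP i.
have RF := Rfar H Hij HiN HjN Hs Ht Az Dz Hz1 Hz2.
have Fx := (x2 H Hij HiN HjN Hs Ht).2.
have [[w [Cw /adjP [q' [d' [Hd' Hw]]]]] _] := Dz; subst w.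
case: (q' =P k) => [Eq|Hqk].
  subst q'; have Ed : d' = u \/ d' = -u by lia.
  case: Ed => Ed; subst d'; last first.
    have E : upd (upd (X2 i s j t) k u) k (-u) = X2 i s j t by veq.
    rewrite E in Cw; exact: (far_notC Fx _ Cw).
  have Fy : far C (upd (P1 i s) k u) 2.
    by apply: (Dp H HiN Hs); [adjt k u | vneqP i | vneqP k].
  have Dy : distC C (upd (P1 i s) k u) 2.
    split => //; exists (zerov n); split; [exact: H.1 | l1t i k].
  have [_ [_ [_ [_ [_ [N21 _]]]]]] := H.
  apply: (nb_no4 (N21 _ Dy) (u1 := P1 i s) (u2 := P1 k u) (u3 := upd (X2 i s j t) k u)
      (u4 := upd (upd (P1 i s) k u) k u)).
  - adjt k (-u).
  - exact: (pC1 H).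
  - adjt i (-s).
  - exact: (pC1 H).
  - adjt j t.
  - done.
  - adjt k u.
  - apply: (C1_of _ Cw); last by adjt j t.
    move=> Cv; apply: (far_adj Fy Cv); adjt k u.
  - apply: uniq4; [vneqP i | vneqP k | vneqP k | vneqP i | vneqP i | vneqP j].
case: (q' =P i) => [Eq|Hqi].
  subst q'; have Ed : d' = s \/ d' = -s by lia.
  case: Ed => Ed; subst d'.
    apply: (far_adj (u := upd (X2 i s j t) i s) _ Cw); last by adjt k u.
    apply: RF; [adjt i s | vneqP j | vneqP i | vneqP i].
  have F : far C (upd (upd (X2 i s j t) k u) i (-s)) 2.
    by apply: (Dp H HjN Ht); [adjt k u | vneqP j | vneqP N].
  exact: (far_notC F _ Cw).
case: (q' =P j) => [Eq|Hqj].
  subst q'; have Ed : d' = t \/ d' = -t by lia.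
  case: Ed => Ed; subst d'.
    apply: (far_adj (u := upd (X2 i s j t) j t) _ Cw); last by adjt k u.
    apply: RF; [adjt j t | vneqP j | vneqP i | vneqP j].
  have F : far C (upd (upd (X2 i s j t) k u) j (-t)) 2.
    by apply: (Dp H HiN Hs); [adjt k u | vneqP i | vneqP N].
  exact: (far_notC F _ Cw).
case: (q' =P N) => [Eq|HqN].
  subst q'; case: Hd' => ?; subst d'.
    apply: (far_adj (u := upd (X2 i s j t) N 1) _ Cw); last by adjt k u.
    apply: RF; [adjt N (1:int) | vneqP j | vneqP i | vneqP N].
  apply: (far_adj (xm2 H Hij HiN HjN Hs Ht) Cw); adjt k u.
apply: (far_adj (u := upd (X2 i s j t) q' d') _ Cw); last by adjt k u.
apply: RF; [adjt q' d' | vneqP q' | vneqP q' | vneqP q'].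
Qed.

Lemma zI n (C : code n) N (H : Hyps C N) i j (s t : int) :
  i <> j -> i <> N -> j <> N -> sg1 s -> sg1 t ->
  distC C (upd (X2 i s j t) i s) 1 -> C (upd (upd (X2 i s j t) i s) i s).
Proof.
move=> Hij HiN HjN Hs Ht Dz.
have Az : adj (X2 i s j t) (upd (X2 i s j t) i s) by adjt i s.
have Hz1 : upd (X2 i s j t) i s <> P1 i s by vneqP j.
have Hz2 : upd (X2 i s j t) i s <> P1 j t by vneqP i.
have RF := Rfar H Hij HiN HjN Hs Ht Az Dz Hz1 Hz2.
have Fx := (x2 H Hij HiN HjN Hs Ht).2.
have [[w [Cw /adjP [q' [d' [Hd' Hw]]]]] _] := Dz; subst w.
case: (q' =P i) => [Eq|Hqi].
  subst q'; have Ed : d' = s \/ d' = -s by lia.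
  case: Ed => Ed; subst d'.
    done.
  exfalso; have E : upd (upd (X2 i s j t) i s) i (-s) = X2 i s j t by veq.
  rewrite E in Cw; exact: (far_notC Fx _ Cw).
case: (q' =P j) => [Eq|Hqj].
  subst q'; have Ed : d' = t \/ d' = -t by lia.
  case: Ed => Ed; subst d'; exfalso.
    apply: (far_adj (u := upd (X2 i s j t) j t) _ Cw); last by adjt i s.
    apply: RF; [adjt j t | vneqP j | vneqP i | vneqP i].
  have F : far C (upd (upd (X2 i s j t) i s) j (-t)) 2.
    by apply: (Dp H HiN Hs); [adjt i s | vneqP i | vneqP N].
  exact: (far_notC F _ Cw).
case: (q' =P N) => [Eq|HqN].
  subst q'; exfalso; case: Hd' => ?; subst d'.
    apply: (far_adj (u := upd (X2 i s j t) N 1) _ Cw); last by adjt i s.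
    apply: RF; [adjt N (1:int) | vneqP j | vneqP i | vneqP N].
  apply: (far_adj (xm2 H Hij HiN HjN Hs Ht) Cw); adjt i s.
exfalso; apply: (far_adj (u := upd (X2 i s j t) q' d') _ Cw); last by adjt i s.
apply: RF; [adjt q' d' | vneqP q' | vneqP q' | vneqP q'].
Qed.
Lemma part2 n (C : code n) N (H : Hyps C N) i j (s t : int) :
  i <> j -> i <> N -> j <> N -> sg1 s -> sg1 t ->
  distC C (X2 i s j t) 2 /\ exists y, C y /\
    (y = upd (upd (X2 i s j t) i s) i s \/ y = upd (upd (X2 i s j t) j t) j t) /\
    forall y', C y' -> l1 (X2 i s j t) y' = 2%N -> y' <> zerov n -> y' = y.
Proof.
move=> Hij HiN HjN Hs Ht.
have Dx := x2 H Hij HiN HjN Hs Ht.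
have [_ [_ [_ [N10 [_ [N21 _]]]]]] := H.
have [z [Az [Dz [/eqP Hz1 /eqP Hz2]]]] := @nb_ex3 _ _ _ _ (P1 i s) (P1 j t) (N21 _ Dx).
have RF := Rfar H Hij HiN HjN Hs Ht Az Dz Hz1 Hz2.
suff [y [Cy [Fy Ay]]] : exists y, C y /\
    (y = upd (upd (X2 i s j t) i s) i s \/ y = upd (upd (X2 i s j t) j t) j t) /\ adj z y.
  split => //; exists y; split => //; split => // y' Cy' Ly' Hy'.
  have [r [Ar Lr]] := midpoint Ly'.
  have Dr : distC C r 1.
    apply: (C1_of _ Cy' Lr) => Cr; exact: (far_adj Dx.2 Cr Ar).
  case: (r =P P1 i s) => [Er|Hr1].
    subst r; exfalso; apply: Hy'; apply: (nb_eq1 (N10 _ Dr)) => //; try (by apply/distC0; first [exact: H.1 | assumption]).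
    apply: adj_sym; adjt i s.
  case: (r =P P1 j t) => [Er|Hr2].
    subst r; exfalso; apply: Hy'; apply: (nb_eq1 (N10 _ Dr)) => //; try (by apply/distC0; first [exact: H.1 | assumption]).
    apply: adj_sym; adjt j t.
  case: (r =P z) => [Er|Hr3].
    subst r; apply: (nb_eq1 (N10 _ Dr)) => //; by apply/distC0.
  exfalso; have := RF r Ar Hr1 Hr2 Hr3 y' Cy'; by rewrite Lr.
have [q [d [Hd Ez]]] := adjP Az; subst z.
case: (q =P i) => [Eq|Hqi].
  subst q; have Ed : d = s \/ d = -s by lia.
  case: Ed => Ed; subst d.
    exists (upd (upd (X2 i s j t) i s) i s); split; first exact: (zI H).
    split; [by left | adjt i s].
  exfalso; apply: Hz2; veq.
case: (q =P j) => [Eq|Hqj].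
  subst q; have Ed : d = t \/ d = -t by lia.
  case: Ed => Ed; subst d.
    have E : X2 j t i s = X2 i s j t by veq.
    exists (upd (upd (X2 i s j t) j t) j t); split.
      rewrite -E; apply: (zI H) => //; try exact: not_eq_sym; by rewrite E.
    split; [by right | adjt j t].
  exfalso; apply: Hz1; veq.
exfalso.
case: (q =P N) => [Eq|HqN].
  subst q; case: Hd => ?; subst d; first exact: (zN H Hij HiN HjN Hs Ht Dz).
  have [[c [Cc Lc]] _] := Dz.
  have := (xm2 H Hij HiN HjN Hs Ht) c Cc; by rewrite Lc.
exact: (zK H Hij HiN HjN Hs Ht Hqi Hqj HqN Hd Dz).
Qed.
Lemma capU n (C : code n) (i : 'I_n) (eps : int) x y :
  (forall v, C v -> nbcount C v 0 1) -> (forall v, distC C v 1 -> nbcount C v 0 1) ->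
  C x -> C y -> cap i eps x -> cap i eps y -> x = y.
Proof.
move=> N0 N10 Cx Cy [j [/eqP Hj [a [Ha Hx]]]] [j' [/eqP Hj' [b [Hb Hy]]]].
pose v : vert n := [ffun k => if k == i then 3 * eps else 0].
have Ax : adj v x.
  apply: (adj_by (q := j) (d := a)) => //; apply/ffunP => k; rewrite !ffunE Hx.
  vcase; lia.
have Ay : adj v y.
  apply: (adj_by (q := j') (d := b)) => //; apply/ffunP => k; rewrite !ffunE Hy.
  vcase; lia.
case: (classic (C v)) => Cv.
  apply: (nb_eq1 (N0 _ Cv)) => //; by apply/distC0.
have Dv : distC C v 1 by apply: (C1_of Cv Cx).
apply: (nb_eq1 (N10 _ Dv)) => //; by apply/distC0.
Qed.
Lemma y3100 n (N : 'I_n) (HNv : forall k : 'I_n, val k = n.-1 -> k = N) i j (s t : int) :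
  i <> j -> i <> N -> j <> N -> sg1 s -> sg1 t ->
  type3100 (upd (upd (X2 i s j t) i s) i s) /\ lastzero (upd (upd (X2 i s j t) i s) i s) /\
  l1 (X2 i s j t) (upd (upd (X2 i s j t) i s) i s) = 2%N.
Proof.
move=> Hij HiN HjN Hs Ht; split; [|split].
- exists i, j; split; first by apply/eqP.
  split; first by rewrite !ffunE; vcase; lia.
  split; first by rewrite !ffunE; vcase; lia.
  move=> k /eqP ? /eqP ?; rewrite !ffunE; vcase; lia.
- move=> k /HNv ->; rewrite !ffunE; vcase; lia.
- rewrite (l1_single (q := i)); first by rewrite !ffunE; vcase; lia.
  move=> k /eqP ?; rewrite !ffunE; vcase; lia.
Qed.

Lemma list3100 n (C : code n) (HN2 : (2 <= n)%N)
  (U : forall i eps x y, C x -> C y -> cap i eps x -> cap i eps y -> x = y) :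
  exists s : seq (vert n), (size s <= 2 * (n - 1))%N /\
    forall x, C x -> type3100 x -> slice0 x -> x \in s.
Proof.
pose inh := inhabits (zerov n).
pose P (k : nat) (e : int) x := C x /\ exists i : 'I_n, val i = k /\ cap i e x.
exists [seq epsilon inh (P k e) | k <- iota 0 n.-1, e <- [:: 1; -1]].
split; first by rewrite size_allpairs size_iota /=; lia.
move=> x Cx [i [j [Hij [Hi [Hj Hr]]]]] Hsl.
pose e : int := if 0 < x i then 1 else -1.
have Hc : cap i e x.
  exists j; split; first by rewrite eq_sym.
  exists (x j); split; first lia.
  move=> k; have [->|Hki] := eqVneq k i.
    rewrite ?eqxx /e; case: ifP => ?; lia.
  have [->|Hkj] := eqVneq k j.
    by rewrite ?eqxx ?(negbTE Hki).
  by rewrite ?(negbTE Hki) ?(negbTE Hkj) Hr.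
have HiN : (nat_of_ord i < n.-1)%N.
  have Hl := ltn_ord i.
  case: (nat_of_ord i =P n.-1) => E; last by lia.
  have := Hsl i E; lia.
apply/allpairsP; exists (nat_of_ord i, e); split.
- by rewrite mem_iota leq0n add0n HiN.
- by rewrite /e; case: ifP => _; rewrite !inE eqxx ?orbT.
- have := @epsilon_spec _ inh (P (nat_of_ord i) e) (ex_intro _ x (conj Cx (ex_intro _ i (conj erefl Hc)))).
  move=> [Cy [i' [Ei' Hc']]]; have Eii : i' = i by apply: val_inj.
  subst i'; exact: (U i e x _ Cx Cy Hc Hc').
Qed.

Unset Implicit Arguments.
Set Strict Implicit.

Theorem mainTheorem11 (n : nat) (C : code n) (rho : nat) (alpha : nat -> nat -> nat) :
  (2 <= n)%N ->
  CRC C rho alpha -> all_ones rho alpha -> (2 <= rho)%N ->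
  alpha 1%N 0%N = 1%N -> alpha 2%N 1%N = 3%N ->
  C (zerov n) -> C (minus_en n) ->
  ((forall (i : 'I_n) (eps : int), (eps = 1 \/ eps = -1) ->
      forall x y : vert n, C x -> C y -> cap i eps x -> cap i eps y ->
        slice0 x -> slice0 y -> x = y) /\
   (exists s : seq (vert n), (size s <= 2 * (n - 1))%N /\
      forall x, C x -> type3100 x -> slice0 x -> x \in s)) /\
  (forall x : vert n, type1100 x -> lastzero x ->
     distC C x 2 /\
     exists y : vert n, (C y /\ type3100 y /\ lastzero y /\ l1 x y = 2%N) /\
       forall y' : vert n, C y' /\ type3100 y' /\ lastzero y' /\ l1 x y' = 2%N -> y' = y).
Proof.
move=> Hn [Hcov [HN Hz]] Hones Hrho H10 H21 C0 Cm.
have N0 : forall v, C v -> nbcount C v 0 1.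
  move=> v Cv; have := HN 0%N 0%N v; rewrite Hones //; apply => //; by apply/distC0.
have N10 : forall v, distC C v 1 -> nbcount C v 0 1.
  move=> v Dv; have := HN 1%N 0%N v; rewrite H10; apply => //; lia.
have N11 : forall v, distC C v 1 -> nbcount C v 1 1.
  move=> v Dv; have := HN 1%N 1%N v; rewrite Hones; [apply; lia || done | lia].
have N21 : forall v, distC C v 2 -> nbcount C v 1 3.
  move=> v Dv; have := HN 2%N 1%N v; rewrite H21; apply => //; lia.
have N22 : forall v, distC C v 2 -> nbcount C v 2 1.
  move=> v Dv; have := HN 2%N 2%N v; rewrite Hones //; apply => //.
have HNlt : (n.-1 < n)%N by lia.
pose N := Ordinal HNlt.
have Em : minus_en n = upd (zerov n) N (-1).
  by apply/ffunP => k; rewrite !ffunE add0r.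
have H : Hyps C N by rewrite /Hyps -Em.
have U : forall i eps x y, C x -> C y -> cap i eps x -> cap i eps y -> x = y.
  move=> i eps x y; exact: capU.
split.
  split; last exact: list3100.
  move=> i eps _ x y Cx Cy Hx Hy _ _; exact: (U i eps).
have HNv : forall k : 'I_n, val k = n.-1 -> k = N by move=> k E; apply: val_inj.
move=> x [i [j [Hij [Hi [Hj Hr]]]]] Hlz.
have HiN : i <> N.
  move=> E; have := Hlz i; rewrite E => /(_ erefl) H0; rewrite E H0 in Hi; lia.
have HjN : j <> N.
  move=> E; have := Hlz j; rewrite E => /(_ erefl) H0; rewrite E H0 in Hj; lia.
have Ex : x = X2 i (x i) j (x j).
  apply/ffunP => k; rewrite !ffunE.
  have [->|Hki] := eqVneq k i.
    rewrite ?eqxx ?(negbTE Hij) /=; lia.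
  have [->|Hkj] := eqVneq k j.
    rewrite ?eqxx ?(negbTE Hij) /=; lia.
  rewrite ?(negbTE Hki) ?(negbTE Hkj) /= Hr //; lia.
move: (x i) (x j) Hi Hj Ex => s t Hi Hj Ex; subst x.
have Hs : sg1 s by lia.
have Ht : sg1 t by lia.
move/eqP: Hij => Hij.
have [Dx [y [Cy [Fy Uy]]]] := part2 H Hij HiN HjN Hs Ht.
split => //; exists y; split.
  split => //; case: Fy => ->; first exact: (y3100 HNv).
  have E : X2 i s j t = X2 j t i s by veq.
  rewrite E; apply: (y3100 HNv) => //; exact: not_eq_sym.
move=> y' [Cy' [Ty' [_ Ly']]]; apply: Uy => // E; subst y'.
case: Ty' => [a [b [_ [Ha _]]]]; rewrite ffunE in Ha; lia.
Qed.
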